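(* Let $R$ be a (not necessarily commutative) local ring with maximal ideal $\mathfrak{m}$, separated and complete for the $\mathfrak{m}$-adic topology, $\sigma:R\to R$ a ring automorphism with $\sigma(\mathfrak{m})=\mathfrak{m}$, and $\delta:R\to R$ a $\sigma$-derivation with $\delta(R)\subseteq\mathfrak{m}$ and $\delta(\mathfrak{m})\subseteq\mathfrak{m}^2$. Let $A=R[[X;\sigma,\delta]]$ and let $f\in A$ have finite reduced order $s=\mathrm{ord}^{red}(f)<\infty$. Then $A$ is the direct sum of left $R$-modules $$A=Af\oplus\bigoplus_{i=0}^{s-1}RX^i.$$
   Context: A $\sigma$-derivation is an additive map with $\delta(rs)=\delta(r)s+\sigma(r)\delta(s)$. $R[[X;\sigma,\delta]]$ is the skew power series ring whose elements are formal series $\sum_{n\ge0}r_nX^n$ ($r_n\in R$), with multiplication determined by $Xr=\sigma(r)X+\delta(r)$ (well defined by the hypotheses on $\sigma,\delta$ and completeness). For $f=\sum a_iX^i\in A$, $\mathrm{ord}^{red}(f)=\min\{i: a_i\in R^\times\}$. *)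

(* Defs.v *)
From HB Require Import structures.
From mathcomp Require Import all_boot all_order all_algebra.
From Stdlib Require Import ClassicalEpsilon.
Set Implicit Arguments. Unset Strict Implicit. Unset Printing Implicit Defensive.
Import GRing.Theory.
Local Open Scope ring_scope.

Section SkewPowerSeries.
Variable R : unitRingType.

(* The maximal ideal of a (noncommutative) local ring: the set of non-units
   (two-sided invertibility, as in mathcomp's unitRingType). *)
Definition maxid : pred R := fun x => x \isn't a GRing.unit.

(* R is local: the non-units form an (additively closed, hence two-sided) ideal. *)
Definition is_local : Prop := forall x y, maxid x -> maxid y -> maxid (x + y).

(* mpow n x  <->  x lies in m^n, the additive span of products a_1 ... a_n, a_i in m
   (m^0 = R). *)
Inductive mpow : nat -> R -> Prop :=
| mpow_0 x : mpow 0 x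
| mpow_mul n a b : maxid a -> mpow n b -> mpow n.+1 (a * b)
| mpow_add n x y : mpow n.+1 x -> mpow n.+1 y -> mpow n.+1 (x + y).

Definition madic_lim (u : nat -> R) (L : R) : Prop :=
  forall k, exists N, forall i, (N <= i)%N -> mpow k (u i - L).
Definition madic_cauchy (u : nat -> R) : Prop :=
  forall k, exists N, forall i j, (N <= i)%N -> (N <= j)%N -> mpow k (u i - u j).
Definition madic_separated : Prop := forall x, (forall k, mpow k x) -> x = 0.
Definition madic_complete : Prop :=
  forall u, madic_cauchy u -> exists L, madic_lim u L.

(* the m-adic limit of a sequence (unique when R is separated) *)
Definition mlim (u : nat -> R) : R := epsilon (inhabits 0) (madic_lim u).

Definition sigma_derivation (sigma delta : R -> R) : Prop :=
  (forall x y, delta (x + y) = delta x + delta y) /\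
  (forall r s, delta (r * s) = delta r * s + sigma r * delta s).

Definition series := nat -> R.

(* xpow_coef sigma delta n r k = coefficient of X^k in X^n r,
   computed from X r = sigma(r) X + delta(r). *)
Fixpoint xpow_coef (sigma delta : R -> R) (n : nat) (r : R) (k : nat) : R :=
  match n with
  | 0 => if k is 0 then r else 0
  | n'.+1 => (if k is k'.+1 then sigma (xpow_coef sigma delta n' r k') else 0)
             + delta (xpow_coef sigma delta n' r k)
  end.

(* Product in R[[X; sigma, delta]]:
   (sum_i a_i X^i)(sum_j b_j X^j) = sum_{i,j} a_i (X^i b_j) X^j,
   coefficient of X^n = sum_{j<=n} sum_{i>=0} a_i [X^(n-j)](X^i b_j),
   the inner (infinite) sum being an m-adic limit of partial sums. *)
Definition smul (sigma delta : R -> R) (a b : series) : series :=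
  fun n => \sum_(j < n.+1)
             mlim (fun N => \sum_(i < N) a i * xpow_coef sigma delta i (b j) (n - j)).

Definition sadd (a b : series) : series := fun n => a n + b n.

Definition ord_red_eq (f : series) (s : nat) : Prop :=
  f s \is a GRing.unit /\ (forall i, (i < s)%N -> maxid (f i)).

End SkewPowerSeries.

(* Main.v *)
Require Import Defs.
From HB Require Import structures.
From mathcomp Require Import all_boot all_order all_algebra.
From Stdlib Require Import ClassicalEpsilon FunctionalExtensionality.
From mathcomp Require Import zify.
Set Implicit Arguments. Unset Strict Implicit. Unset Printing Implicit Defensive.
Import GRing.Theory.
Local Open Scope ring_scope.

Section Main.
Variable R : unitRingType.
Hypothesis loc : is_local R.
Hypothesis sep : madic_separated R.
Hypothesis comp : madic_complete R.

Lemma m0 : maxid (0 : R).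
Proof. by rewrite /maxid unitr0. Qed.

Lemma mN (x : R) : maxid x -> maxid (- x).
Proof. by rewrite /maxid unitrN. Qed.

Lemma unit_plus_m (u x : R) : u \is a GRing.unit -> maxid x -> u + x \is a GRing.unit.
Proof.
move=> Hu Hx; apply/negPn/negP => H.
have := loc H (mN Hx); rewrite /maxid addrK => /negP; by [].
Qed.

Lemma rinv_unit (x r : R) : x * r = 1 -> x \is a GRing.unit.
Proof.
move=> Hxr; set e := r * x.
have ee : e * e = e by rewrite /e mulrA -(mulrA r) Hxr mulr1.
case Eu: (e \is a GRing.unit).
  have e1 : e = 1.
    have := mulKr Eu e; rewrite ee mulVr // => <-; done.
  by apply/unitrP; exists r; split.
have H1 : ~~ ((1 - e) \is a GRing.unit).
  apply/negP => Hu.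
  have : x * (1 - e) = 0 by rewrite mulrBr mulr1 /e mulrA Hxr mul1r subrr.
  move/(congr1 (fun y => y * (1 - e)^-1)); rewrite mulrK // mul0r => x0.
  by move: Hxr; rewrite x0 mul0r => /esym/eqP; rewrite oner_eq0.
have := loc (negbT Eu) H1; rewrite /maxid addrC subrK unitr1; by [].
Qed.

Lemma mMr (x y : R) : maxid x -> maxid (x * y).
Proof.
move=> Hx; apply/negP => /unitrP [u [_ H]]; move/negP: Hx; apply.
by apply: (rinv_unit (r := y * u)); rewrite mulrA.
Qed.

Lemma mMl (x y : R) : maxid x -> maxid (y * x).
Proof.
move=> Hx; apply/negP => /unitrP [u [H _]]; move/negP: Hx; apply.
have Hl : (u * y) \is a GRing.unit by apply: (rinv_unit (r := x)); rewrite -mulrA.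
have -> : x = (u * y)^-1 by rewrite -[x]mul1r -(mulVr Hl) -mulrA -(mulrA u) H mulr1.
by rewrite unitrV.
Qed.

Lemma mp0 n : mpow n (0 : R).
Proof. case: n => [|n]; first by constructor. rewrite -(mul0r (0:R)). constructor; [exact: m0 | ].
elim: n => [|n IH]; first by constructor. rewrite -(mul0r (0:R)); constructor => //; exact: m0.
Qed.

Lemma mpD n (x y : R) : mpow n x -> mpow n y -> mpow n (x + y).
Proof. case: n => [|n] Hx Hy; [constructor | exact: mpow_add]. Qed.

Lemma mpN n (x : R) : mpow n x -> mpow n (- x).
Proof.
elim => [z|k a b Ha Hb IH|k a b _ IHa _ IHb]; first constructor.
  by rewrite -mulNr; constructor => //; exact: mN.
by rewrite opprD; exact: mpow_add.
Qed.

Lemma mpB n (x y : R) : mpow n x -> mpow n y -> mpow n (x - y).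
Proof. by move=> Hx Hy; apply: mpD => //; apply: mpN. Qed.

Lemma mpMr n (x y : R) : mpow n x -> mpow n (x * y).
Proof.
move=> H; elim: H y => [z|k a b Ha Hb IH|k a b _ IHa _ IHb] y; first constructor.
  by rewrite -mulrA; constructor.
by rewrite mulrDl; exact: mpow_add.
Qed.

Lemma mpMl n (x y : R) : mpow n x -> mpow n (y * x).
Proof.
move=> H; elim: H y => [z|k a b Ha Hb IH|k a b _ IHa _ IHb] y; first constructor.
  by rewrite mulrA; constructor => //; exact: mMl.
by rewrite mulrDr; exact: mpow_add.
Qed.

Lemma mp_pred n (x : R) : mpow n x -> mpow n.-1 x.
Proof.
elim => [z|k a b Ha Hb IH|k a b _ IHa _ IHb]; first constructor.
  by case: k Hb IH => [|k] Hb IH /=; constructor.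
by apply: mpD.
Qed.

Lemma mp_mono n k (x : R) : mpow n x -> (k <= n)%N -> mpow k x.
Proof.
move=> H Hk; rewrite -(subnK Hk) in H; move: (n - k)%N H => d.
elim: d => [|d IH] H //=.
by apply: IH; have := mp_pred H.
Qed.

Lemma mpM a b (x y : R) : mpow a x -> mpow b y -> mpow (a + b) (x * y).
Proof.
move=> H; elim: H b y => [z|k c d Hc Hd IH|k c d _ IHa _ IHb] b y Hy.
  by rewrite add0n; apply: mpMl.
  by rewrite addSn -mulrA; constructor => //; apply: IH.
by rewrite mulrDl addSn; apply: mpow_add; rewrite -addSn; [apply: IHa|apply: IHb].
Qed.

Lemma mp1 (x : R) : maxid x <-> mpow 1 x.
Proof.
split => [H|]; first by rewrite -[x]mulr1; constructor => //; constructor.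
move E : 1%N => n H; elim: H E => [z|k a b Ha Hb IH|k a b _ IHa _ IHb] //= E.
  by apply: mMr.
by apply: loc; [apply: IHa|apply: IHb].
Qed.

Lemma mp_sum n (I : Type) (r : seq I) (P : pred I) (F : I -> R) :
  (forall i, P i -> mpow n (F i)) -> mpow n (\sum_(i <- r | P i) F i).
Proof.
move=> H; elim/big_rec: _ => [|i y Pi Hy]; first exact: mp0.
by apply: mpD => //; apply: H.
Qed.


Definition null (u : nat -> R) := forall k, exists N, forall i, (N <= i)%N -> mpow k (u i).
Definition psum (u : nat -> R) := fun N => \sum_(i < N) u i.
Definition S (u : nat -> R) := mlim (psum u).

Lemma subsub (a b c : R) : (a - b) - (a - c) = c - b.
Proof. by rewrite opprB (addrC (a - b)) addrA subrK. Qed.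

Lemma addsub (a b : R) : (a + b) - a = b.
Proof. by rewrite addrAC subrr add0r. Qed.

Lemma lim_unique u (L L' : R) : madic_lim u L -> madic_lim u L' -> L = L'.
Proof.
move=> H H'; apply/eqP; rewrite -subr_eq0; apply/eqP/sep => k.
have [N HN] := H k; have [N' HN'] := H' k.
have := mpB (HN' (maxn N N') (leq_maxr _ _)) (HN (maxn N N') (leq_maxl _ _)).
by rewrite subsub.
Qed.

Lemma mlimE u (L : R) : madic_lim u L -> mlim u = L.
Proof.
move=> H; apply: (@lim_unique u) => //; rewrite /mlim.
by apply: epsilon_spec; exists L.
Qed.

Lemma psum_split u K N : (K <= N)%N ->
  psum u N = psum u K + \sum_(K <= i < N) u i.
Proof.
move=> KN; rewrite /psum -!(big_mkord xpredT u).
by rewrite (big_cat_nat (leq0n K) KN).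
Qed.

Lemma null_cauchy u : null u -> madic_cauchy (psum u).
Proof.
move=> Hu k; have [N HN] := Hu k; exists N.
have key : forall a b, (N <= a)%N -> (a <= b)%N -> mpow k (psum u b - psum u a).
  move=> a b Ha ab; rewrite (psum_split u ab) addsub.
  rewrite big_nat_cond; apply: mp_sum => l /andP [/andP [al _] _]; apply: HN.
  exact: leq_trans al.
move=> i j Hi Hj; case: (leqP i j) => ij; first by rewrite -opprB; apply: mpN; apply: key.
by apply: key => //; apply: ltnW.
Qed.

Lemma S_lim u : null u -> madic_lim (psum u) (S u).
Proof.
move=> Hu; have [L HL] := comp (null_cauchy Hu).
by rewrite /S (mlimE HL).
Qed.

Lemma lim_add u v (L L' : R) : madic_lim u L -> madic_lim v L' ->
  madic_lim (fun i => u i + v i) (L + L').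
Proof.
move=> H H' k; have [N HN] := H k; have [N' HN'] := H' k; exists (maxn N N') => i Hi.
have -> : u i + v i - (L + L') = (u i - L) + (v i - L').
  by rewrite opprD addrACA.
apply: mpD; [apply: HN | apply: HN']; apply: leq_trans Hi; [exact: leq_maxl | exact: leq_maxr].
Qed.

Lemma lim_opp u (L : R) : madic_lim u L -> madic_lim (fun i => - u i) (- L).
Proof.
move=> H k; have [N HN] := H k; exists N => i Hi.
by rewrite -opprD; apply: mpN; apply: HN.
Qed.

Lemma lim_mull c u (L : R) : madic_lim u L -> madic_lim (fun i => c * u i) (c * L).
Proof.
move=> H k; have [N HN] := H k; exists N => i Hi.
by rewrite -mulrBr; apply: mpMl; apply: HN.
Qed.

Lemma null_add u v : null u -> null v -> null (fun i => u i + v i).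
Proof.
move=> H H' k; have [N HN] := H k; have [N' HN'] := H' k; exists (maxn N N') => i Hi.
apply: mpD; [apply: HN | apply: HN']; apply: leq_trans Hi; [exact: leq_maxl | exact: leq_maxr].
Qed.

Lemma null_opp u : null u -> null (fun i => - u i).
Proof. by move=> H k; have [N HN] := H k; exists N => i Hi; apply: mpN; apply: HN. Qed.

Lemma null_mull c u : null u -> null (fun i => c * u i).
Proof. by move=> H k; have [N HN] := H k; exists N => i Hi; apply: mpMl; apply: HN. Qed.

Lemma null_sum n (u : nat -> nat -> R) : (forall j, null (u j)) ->
  null (fun i => \sum_(j < n) u j i).
Proof.
move=> H; elim: n => [|n IH].
  by move=> k; exists 0%N => i _; rewrite big_ord0; apply: mp0.
have E : (fun i => \sum_(j < n.+1) u j i) = (fun i => \sum_(j < n) u j i + u n i).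
  by apply: functional_extensionality => i; rewrite big_ord_recr.
by rewrite E; apply: null_add.
Qed.

Lemma S_add u v : null u -> null v -> S (fun i => u i + v i) = S u + S v.
Proof.
move=> Hu Hv; apply: mlimE.
have E : psum (fun i => u i + v i) = (fun N => psum u N + psum v N).
  by apply: functional_extensionality => N; rewrite /psum big_split.
by rewrite E; apply: lim_add; apply: S_lim.
Qed.

Lemma S_opp u : null u -> S (fun i => - u i) = - S u.
Proof.
move=> Hu; apply: mlimE.
have E : psum (fun i => - u i) = (fun N => - psum u N).
  by apply: functional_extensionality => N; rewrite /psum sumrN.
by rewrite E; apply: lim_opp; apply: S_lim.
Qed.

Lemma S_sub u v : null u -> null v -> S (fun i => u i - v i) = S u - S v.
Proof. by move=> Hu Hv; rewrite S_add ?S_opp //; apply: null_opp. Qed.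

Lemma S_mull c u : null u -> S (fun i => c * u i) = c * S u.
Proof.
move=> Hu; apply: mlimE.
have E : psum (fun i => c * u i) = (fun N => c * psum u N).
  by apply: functional_extensionality => N; rewrite /psum mulr_sumr.
by rewrite E; apply: lim_mull; apply: S_lim.
Qed.

Lemma S_sum n (u : nat -> nat -> R) : (forall j, null (u j)) ->
  S (fun i => \sum_(j < n) u j i) = \sum_(j < n) S (u j).
Proof.
move=> H; elim: n => [|n IH].
  rewrite big_ord0; apply: mlimE => k; exists 0%N => i _.
  rewrite /psum big1 => [|l _]; [rewrite subr0; exact: mp0 | by rewrite big_ord0].
rewrite big_ord_recr /= -IH -S_add //; last exact: null_sum.
by congr S; apply: functional_extensionality => i; rewrite big_ord_recr.
Qed.

Lemma S_tail u k K : null u -> (forall i, (K <= i)%N -> mpow k (u i)) ->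
  mpow k (S u - \sum_(i < K) u i).
Proof.
move=> Hu HK; have [N HN] := S_lim Hu k.
have H1 := HN (maxn N K) (leq_maxl _ _).
have H2 : mpow k (psum u (maxn N K) - psum u K).
  rewrite (psum_split u (leq_maxr N K)) addsub.
  rewrite big_nat_cond; apply: mp_sum => l /andP [/andP [al _] _]; exact: HK.
by have := mpB H2 H1; rewrite subsub.
Qed.

Lemma S_mpow u k : null u -> (forall i, mpow k (u i)) -> mpow k (S u).
Proof.
move=> Hu H; have := @S_tail u k 0 Hu (fun i _ => H i).
by rewrite big_ord0 subr0.
Qed.

Lemma S_zero u : null u -> (forall i, u i = 0) -> S u = 0.
Proof. by move=> Hu H; apply: sep => k; apply: S_mpow => // i; rewrite H; apply: mp0. Qed.

Variable sigma : {rmorphism R -> R}.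
Variable delta : R -> R.
Variable f : series R.
Variable s : nat.
Hypothesis sig_m : forall x : R, maxid x <-> maxid (sigma x).
Hypothesis der : sigma_derivation sigma delta.
Hypothesis dm : forall x : R, maxid (delta x).
Hypothesis dm2 : forall x : R, maxid x -> mpow 2 (delta x).
Hypothesis ordf : ord_red_eq f s.

Lemma sigma_mpow a x : mpow a x -> mpow a (sigma x).
Proof.
elim => [z|k b d Hb Hd IH|k b d _ IHa _ IHb]; first constructor.
  by rewrite rmorphM; apply: mpow_mul => //; exact: (proj1 (sig_m b) Hb).
by rewrite rmorphD; apply: mpow_add.
Qed.

Lemma delta_mpow a x : mpow a x -> mpow a.+1 (delta x).
Proof.
case: der => dD dM.
elim => [z|k b d Hb Hd IH|k b d _ IHa _ IHb]; first by apply/mp1.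
  rewrite dM; apply: mpD; last by apply: mpow_mul => //; exact: (proj1 (sig_m b) Hb).
  by have := mpM (dm2 Hb) Hd; rewrite add2n.
by rewrite dD; apply: mpD.
Qed.

Notation c := (xpow_coef sigma delta).

Lemma c_mpow n r k a : mpow a r -> mpow (a + (n - k)) (c n r k).
Proof.
move=> Hr; elim: n k => [|n IH] k /=.
  by case: k => [|k]; rewrite sub0n addn0 //; apply: mp0.
apply: mpD.
  case: k => [|k]; first exact: mp0.
  by rewrite subSS; apply: sigma_mpow; apply: IH.
apply: (mp_mono (delta_mpow (IH k))).
lia.
Qed.

Lemma c_unit n r : r \is a GRing.unit -> c n r n \is a GRing.unit.
Proof.
move=> Hr; elim: n => [|n IH] //=.
by apply: unit_plus_m; [apply: rmorph_unit | apply: dm].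
Qed.

Definition M (i n : nat) := \sum_(j < n.+1) c i (f j) (n - j)%N.

Lemma M_mp i n : mpow (i - n) (M i n).
Proof.
apply: mp_sum => j _; apply: (mp_mono (@c_mpow i (f j) (n - j)%N 0 (mpow_0 _))).
lia.
Qed.

Lemma M_m1 i n : (n < i + s)%N -> maxid (M i n).
Proof.
move=> H; apply/mp1; apply: mp_sum => j _.
case: (ltnP j s) => js.
  have Hf : mpow 1 (f j) by apply/mp1; apply: (proj2 ordf).
  by apply: (mp_mono (@c_mpow i (f j) (n - j)%N 1 Hf)); lia.
apply: (mp_mono (@c_mpow i (f j) (n - j)%N 0 (mpow_0 _))).
have := ltn_ord j; lia.
Qed.

Lemma M_unit k : M k (k + s) \is a GRing.unit.
Proof.
have Hs : (s < (k + s).+1)%N by lia.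
rewrite /M (bigD1 (Ordinal Hs)) //=.
have -> : (k + s - s = k)%N by lia.
apply: unit_plus_m; first by apply: c_unit; apply: (proj1 ordf).
apply/mp1; apply: mp_sum => j Hj.
have Hj' : nat_of_ord j != s.
  by apply: contra Hj => /eqP E; apply/eqP; apply: val_inj.
case: (ltnP j s) => js.
  have Hf : mpow 1 (f j) by apply/mp1; apply: (proj2 ordf).
  by apply: (mp_mono (@c_mpow k (f j) _ 1 Hf)); lia.
apply: (mp_mono (@c_mpow k (f j) _ 0 (mpow_0 _))).
have := ltn_ord j; lia.
Qed.

Definition psi (g : series R) n := S (fun i => g i * M i n).

Lemma null_gM g n : null (fun i => g i * M i n).
Proof.
move=> k; exists (n + k)%N => i Hi; apply: mpMl.
by apply: (mp_mono (M_mp i n)); lia.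
Qed.

Lemma smulE g n : smul sigma delta g f n = psi g n.
Proof.
rewrite /smul.
transitivity (\sum_(j < n.+1) S (fun i => g i * c i (f j) (n - j)%N)); first by [].
rewrite -(@S_sum n.+1 (fun (j : nat) i => g i * c i (f j) (n - j)%N)); last first.
  move=> j k; exists (n + k)%N => i Hi; apply: mpMl.
  by apply: (mp_mono (@c_mpow i (f j) (n - j)%N 0 (mpow_0 _))); lia.
rewrite /psi /M; congr S; apply: functional_extensionality => i.
by rewrite mulr_sumr.
Qed.

Lemma psi_sub g g' n : psi (fun i => g i - g' i) n = psi g n - psi g' n.
Proof.
rewrite /psi -S_sub; try exact: null_gM.
by congr S; apply: functional_extensionality => i; rewrite mulrBl.
Qed.

Lemma psi_sum T (g : nat -> series R) n :
  psi (fun i => \sum_(t < T) g t i) n = \sum_(t < T) psi (g t) n.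
Proof.
rewrite /psi -(@S_sum T (fun t i => g t i * M i n)); last by move=> t; apply: null_gM.
by congr S; apply: functional_extensionality => i; rewrite mulr_suml.
Qed.

Lemma psi_mpow g n k : (forall i, mpow k (g i)) -> mpow k (psi g n).
Proof. by move=> H; apply: S_mpow; [apply: null_gM | move=> i; apply: mpMr]. Qed.

Lemma psi_tail g n t K : (forall i, mpow t (g i)) -> (n < K + s)%N ->
  mpow t.+1 (psi g n - \sum_(i < K) g i * M i n).
Proof.
move=> Hg HK; apply: S_tail; first exact: null_gM.
move=> i Hi; rewrite -addn1; apply: mpM => //; apply/mp1; apply: M_m1; lia.
Qed.

Definition tstep (h : series R) (k : nat) (g : nat -> R) : R :=
  (h (k + s)%N - \sum_(i < k) g i * M i (k + s)) * (M k (k + s))^-1.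

Fixpoint Gt (h : series R) (k : nat) : nat -> R :=
  match k with
  | 0 => fun _ => 0
  | k'.+1 => fun i => if i == k' then tstep h k' (Gt h k') else Gt h k' i
  end.

Definition tri h i := Gt h i.+1 i.

Lemma tri_def h k : tri h k = tstep h k (Gt h k).
Proof. by rewrite /tri /= eqxx. Qed.

Lemma Gt_tri h k i : (i < k)%N -> Gt h k i = tri h i.
Proof.
elim: k => [|k IH] //= Hi.
case: eqP => [->|ne]; first by rewrite tri_def.
by apply: IH; rewrite ltnS leq_eqVlt in Hi; case/orP: Hi => // /eqP.
Qed.

Lemma tri_sum h k : \sum_(i < k) Gt h k i * M i (k + s) = \sum_(i < k) tri h i * M i (k + s).
Proof. by apply: eq_bigr => i _; rewrite Gt_tri. Qed.

Lemma tri_eq h k : \sum_(i < k.+1) tri h i * M i (k + s) = h (k + s)%N.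
Proof.
rewrite big_ord_recr /= tri_def /tstep tri_sum mulrVK; last exact: M_unit.
by rewrite addrC subrK.
Qed.

Lemma tri_mpow h t : (forall n, mpow t (h n)) -> forall i, mpow t (tri h i).
Proof.
move=> Hh i; elim/ltn_ind: i => i IH.
rewrite tri_def /tstep tri_sum; apply: mpMr; apply: mpB => //.
by apply: mp_sum => j _; apply: mpMr; apply: IH.
Qed.

Definition pc (h : series R) n := if (n < s)%N then h n else 0.

Lemma pc_mpow h t : (forall n, mpow t (h n)) -> forall n, mpow t (pc h n).
Proof. by move=> H n; rewrite /pc; case: ifP => _; [apply: H | apply: mp0]. Qed.

Lemma pc_zero h n : (s <= n)%N -> pc h n = 0.
Proof. by rewrite /pc leqNgt => /negbTE ->. Qed.

Lemma step h t : (forall n, mpow t (h n)) ->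
  forall n, mpow t.+1 (h n - psi (tri h) n - pc h n).
Proof.
move=> Hh n; have Ht := tri_mpow Hh.
rewrite /pc; case: ifP => ns.
  have := @psi_tail (tri h) n t 0 Ht ns; rewrite big_ord0 subr0 => H.
  by rewrite addrAC subrr add0r; apply: mpN.
have -> : n = ((n - s) + s)%N by rewrite subnK // leqNgt ns.
have := @psi_tail (tri h) ((n - s) + s) t (n - s).+1 Ht (leqnn _).
by rewrite tri_eq subr0 -opprB => /mpN; rewrite opprK.
Qed.

Lemma rearr (a b c x y : R) : a - x - y = (a - (b + c)) - (x - b) - (y - c).
Proof.
rewrite !opprB !opprD !addrA.
rewrite -(addrA (a - b - c)) (addrC b) !addrA.
rewrite (addrAC (a - b - c) (- x) b) (addrAC (a - b) (-c) b) subrK.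
by rewrite (addrAC (a - c) (- x) c) subrK.
Qed.

Fixpoint hs (h : series R) (t : nat) : series R :=
  match t with
  | 0 => h
  | t'.+1 => fun n => hs h t' n - psi (tri (hs h t')) n - pc (hs h t') n
  end.

Lemma hs_mpow h t n : mpow t (hs h t n).
Proof.
elim: t n => [|t IH] n /=; first by constructor.
by apply: step.
Qed.

Lemma telescope h T n :
  h n - \sum_(t < T) (psi (tri (hs h t)) n + pc (hs h t) n) = hs h T n.
Proof.
elim: T => [|T IH]; first by rewrite big_ord0 subr0.
by rewrite big_ord_recr opprD addrA IH /= opprD addrA.
Qed.

Lemma null_geom (u : nat -> R) : (forall t, mpow t (u t)) -> null u.
Proof. by move=> H k; exists k => t Ht; apply: (mp_mono (H t)). Qed.

Lemma existence h : exists g p : series R,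
  (forall i, (s <= i)%N -> p i = 0) /\ h = sadd (smul sigma delta g f) p.
Proof.
pose gs t := tri (hs h t); pose ps t := pc (hs h t).
have Hg : forall i, null (fun t => gs t i).
  by move=> i; apply: null_geom => t; apply: tri_mpow; apply: hs_mpow.
have Hp : forall n, null (fun t => ps t n).
  by move=> n; apply: null_geom => t; apply: pc_mpow; apply: hs_mpow.
exists (fun i => S (fun t => gs t i)), (fun n => S (fun t => ps t n)); split.
  by move=> i si; apply: S_zero => // t; apply: pc_zero.
apply: functional_extensionality => n; rewrite /sadd smulE.
apply/eqP; rewrite -subr_eq0 opprD addrA; apply/eqP.
apply: sep => T.
rewrite (rearr _ (\sum_(t < T) psi (gs t) n) (\sum_(t < T) ps t n)).
rewrite -big_split telescope.
apply: mpB; first apply: mpB.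
- exact: hs_mpow.
- rewrite -psi_sum -psi_sub; apply: psi_mpow => i.
  apply: S_tail => // t Ht; apply: (mp_mono (tri_mpow (@hs_mpow h t) _)) => //.
- apply: S_tail => // t Ht; apply: (mp_mono (pc_mpow (@hs_mpow h t) _)) => //.
Qed.

Lemma uniqueness (g1 p1 g2 p2 : series R) :
  (forall i, (s <= i)%N -> p1 i = 0) ->
  (forall i, (s <= i)%N -> p2 i = 0) ->
  sadd (smul sigma delta g1 f) p1 = sadd (smul sigma delta g2 f) p2 ->
  smul sigma delta g1 f = smul sigma delta g2 f /\ p1 = p2.
Proof.
move=> H1 H2 H.
have E n : psi g1 n + p1 n = psi g2 n + p2 n.
  by have := congr1 (fun F => F n) H; rewrite /sadd !smulE.
pose d i := g1 i - g2 i.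
have Hd0 k : psi d (k + s) = 0.
  rewrite psi_sub; have := E (k + s)%N; rewrite H1 ?H2 ?leq_addl // !addr0 => ->.
  by rewrite subrr.
have Hd : forall t i, mpow t (d i).
  elim => [|t IHt] i; first by constructor.
  elim/ltn_ind: i => i IH.
  have T := @psi_tail d (i + s) t i.+1 IHt (leqnn _).
  rewrite Hd0 sub0r big_ord_recr /= in T.
  have Hs : mpow t.+1 (\sum_(j < i) d j * M j (i + s)).
    by apply: mp_sum => j _; apply: mpMr; apply: IH.
  have := mpB (mpN T) Hs; rewrite opprK addsub => Hx.
  by have := mpMr (M i (i + s))^-1 Hx; rewrite mulrK //; apply: M_unit.
have Eg : g1 = g2.
  apply: functional_extensionality => i; apply/eqP; rewrite -subr_eq0; apply/eqP.
  by apply: sep => t; apply: Hd.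
subst g2; split => //.
by apply: functional_extensionality => n; apply: (@addrI _ (psi g1 n)); apply: E.
Qed.

End Main.

Theorem mainTheorem5 (R : unitRingType) (sigma : {rmorphism R -> R})
    (delta : R -> R) (f : series R) (s : nat) :
  is_local R -> madic_separated R -> madic_complete R ->
  bijective sigma ->
  (forall x : R, maxid x <-> maxid (sigma x)) ->
  sigma_derivation sigma delta ->
  (forall x : R, maxid (delta x)) ->
  (forall x : R, maxid x -> mpow 2 (delta x)) ->
  ord_red_eq f s ->
  (* A = Af + (+)_{i<s} R X^i *)
  (forall h : series R, exists (g p : series R),
      (forall i, (s <= i)%N -> p i = 0) /\ h = sadd (smul sigma delta g f) p) /\
  (* the sum is direct: components are unique *)
  (forall g1 p1 g2 p2 : series R,
      (forall i, (s <= i)%N -> p1 i = 0) ->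
      (forall i, (s <= i)%N -> p2 i = 0) ->
      sadd (smul sigma delta g1 f) p1 = sadd (smul sigma delta g2 f) p2 ->
      smul sigma delta g1 f = smul sigma delta g2 f /\ p1 = p2).
Proof.
move=> loc sep comp _ sm der dm dm2 ordf; split.
  exact: (existence loc sep comp sm der dm dm2 ordf).
exact: (uniqueness loc sep comp sm der dm dm2 ordf).
Qed.
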